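(* Let $\mathcal F_0\subset\mathcal F_1\subset\dots\subset\mathcal F_T$ be a filtration, $\alpha=(\alpha_k,\dots,\alpha_{k_{\max}})$ a probability distribution on $\{k,\dots,k_{\max}\}$, $c_{\max}>0$ and $\delta\in(0,1)$. Let $i_1,\dots,i_T$ be random indices with $i_t$ being $\mathcal F_t$-measurable, distributed according to $\alpha$, and independent of $\mathcal F_{t-1}$, and let $c_1,\dots,c_T\in[0,c_{\max}]$ with $c_t$ being $\mathcal F_{t-1}$-measurable. Define $C^{\mathsf a}_t=\sum_{\tau\le t}c_\tau$, $C^{\mathsf r}_t=\sqrt{t\sum_{\tau\le t}c_\tau^2}$, $C^{\mathsf a}_{t,i}=\sum_{\tau\le t}\mathbf 1[i_\tau=i]c_\tau$ and $C^{\mathsf r}_{t,i}=\sqrt{\big(\sum_{\tau\le t}\mathbf 1[i_\tau=i]\big)\big(\sum_{\tau\le t}\mathbf 1[i_\tau=i]c_\tau^2\big)}$. Then for any fixed $i$, with probability at least $1-3\delta$, for all $t\le T$, $$C^{\mathsf a}_{t,i}\le1.25\alpha_iC^{\mathsf a}_t+21c_{\max}\log(T/\delta),$$ $$C^{\mathsf r}_{t,i}\le1.25\alpha_iC^{\mathsf r}_t+8c_{\max}\sqrt{\alpha_it\log(T/\delta)}+21c_{\max}\log(T/\delta).$$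
   Context: In the paper, $c_t$ is the corruption level of round $t$, chosen by an adaptive adversary based on the history up to round $t-1$, and $i_t$ is the index of the base algorithm sampled independently from $\alpha$ in round $t$ of the procedure BASIC; $C^{\mathsf a}_{t,i}$, $C^{\mathsf r}_{t,i}$ are the (arithmetic / root-mean-square type) corruption experienced by base algorithm $i$. $\log$ is the natural logarithm. *)

(* Defs.v *)
From HB Require Import structures.
From mathcomp Require Import all_boot all_order all_algebra.
From mathcomp Require Import all_classical all_reals all_analysis.
Set Implicit Arguments. Unset Strict Implicit. Unset Printing Implicit Defensive.
Import Order.TTheory GRing.Theory Num.Theory.
Local Open Scope classical_set_scope.
Local Open Scope ring_scope.

Definition filtration d (Omega : measurableType d) (F : nat -> set (set Omega))
    (T : nat) : Prop :=
  [/\ (forall t, (t <= T)%N -> sigma_algebra setT (F t)),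
      (forall t, (t <= T)%N -> F t `<=` measurable) &
      (forall t, (t < T)%N -> F t `<=` F t.+1)].

(* X : Omega -> nat is G-measurable (nat carries the discrete sigma-algebra). *)
Definition nat_measurable_wrt d (Omega : measurableType d)
    (G : set (set Omega)) (X : Omega -> nat) : Prop :=
  forall j : nat, G (X @^-1` [set j]).

Definition real_measurable_wrt d (Omega : measurableType d) (R : realType)
    (G : set (set Omega)) (X : Omega -> R) : Prop :=
  forall B : set R, measurable B -> G (X @^-1` B).

Definition Ca (R : realType) (Omega : Type) (c : nat -> Omega -> R)
    (t : nat) (w : Omega) : R :=
  \sum_(1 <= tau < t.+1) c tau w.

Definition Cr (R : realType) (Omega : Type) (c : nat -> Omega -> R)
    (t : nat) (w : Omega) : R :=
  Num.sqrt (t%:R * \sum_(1 <= tau < t.+1) (c tau w) ^+ 2).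

Definition Cai (R : realType) (Omega : Type) (c : nat -> Omega -> R)
    (idx : nat -> Omega -> nat) (t i : nat) (w : Omega) : R :=
  \sum_(1 <= tau < t.+1) (idx tau w == i)%:R * c tau w.

Definition Cri (R : realType) (Omega : Type) (c : nat -> Omega -> R)
    (idx : nat -> Omega -> nat) (t i : nat) (w : Omega) : R :=
  Num.sqrt ((\sum_(1 <= tau < t.+1) (idx tau w == i)%:R) *
            (\sum_(1 <= tau < t.+1) (idx tau w == i)%:R * (c tau w) ^+ 2)).

(* Main.v *)
Require Import Defs.
From HB Require Import structures.
From mathcomp Require Import all_boot all_order all_algebra.
From mathcomp Require Import all_classical all_reals all_analysis.
From mathcomp Require Import measurable_realfun.
From mathcomp Require Import ring lra.
Import Order.TTheory GRing.Theory Num.Theory.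
Set Implicit Arguments. Unset Strict Implicit. Unset Printing Implicit Defensive.
Local Open Scope classical_set_scope.
Local Open Scope ring_scope.

Section KL.
Context (R : realType) d (Omega : measurableType d) (P : probability Omega R).

Lemma gsub (G : set (set Omega)) (GM : G `<=` measurable) :
  G.-sigma.-measurable `<=` (measurable : set (set Omega)).
Proof. exact: (smallest_sub (@sigma_algebra_measurable _ Omega) GM). Qed.

Lemma gmeas_fun d' (Y : measurableType d') (G : set (set Omega)) (GM : G `<=` measurable)
  (f : g_sigma_algebraType G -> Y) :
  measurable_fun setT f -> measurable_fun (setT : set Omega) f.
Proof.
move=> mf _ B mB; have := mf measurableT B mB; move=> /(@gsub G GM); exact.
Qed.

Arguments gmeas_fun {d' Y G} GM {f}.
Import HBNNSimple.

Lemma KL (G : set (set Omega)) (GM : G `<=` measurable) (GS : sigma_algebra setT G)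
  (E : set Omega) (mE : measurable E) (beta : {nonneg R})
  (hE : forall A, G A -> P (A `&` E) = (beta%:num%:E * P A)%E)
  (f : g_sigma_algebraType G -> \bar R) (mf : measurable_fun setT f)
  (f0 : forall x, (0 <= f x)%E) :
  (\int[P]_(x in E) f x = beta%:num%:E * \int[P]_x f x)%E.
Proof.
have mfO := gmeas_fun GM mf.
rewrite -ge0_integral_mscale //.
pose f_ := nnsfun_approx (@measurableT _ (g_sigma_algebraType G)) mf.
have cvgf x : EFin \o f_ ^~ x @ \oo --> f x.
  have := @cvg_nnsfun_approx _ (g_sigma_algebraType G) R setT measurableT f mf (fun x _ => f0 x) x I; exact.
have limf x : f x = limn (fun n => (f_ n x)%:E).
  by apply/esym/cvg_lim => //; exact: cvgf.
have mfn n : measurable_fun (setT : set Omega) (fun x => (f_ n x)%:E).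
  by apply/measurable_EFinP; apply: (gmeas_fun GM); exact: measurable_funPT.
have ndf x : nondecreasing_seq (fun n => (f_ n x)%:E).
  by move=> m n mn; rewrite lee_fin; exact/lefP/nd_nnsfun_approx.
under eq_integral do rewrite limf.
under [in RHS]eq_integral do rewrite limf.
rewrite monotone_convergence //; last 2 first.
- by move=> n; exact: measurable_funS (mfn n).
- by move=> n x _; rewrite lee_fin.
rewrite monotone_convergence //; last 1 first.
- by move=> n x _; rewrite lee_fin.
congr (limn _); apply/funext => n.
have mlev r : measurable (f_ n @^-1` [set r] : set Omega).
  apply: (@gsub G GM); rewrite -[_ @^-1` _]setTI; exact: measurable_funPT.
have Glev r : G (f_ n @^-1` [set r]).
  set X := f_ n @^-1` [set r].
  have h : G.-sigma.-measurable X by rewrite /X -[_ @^-1` _]setTI; exact: measurable_funPT.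
  change (<<s G>> X) in h.
  by rewrite (sigma_algebra_id GS) in h.
under eq_integral do rewrite fimfunE -fsumEFin//.
under [in RHS]eq_integral do rewrite fimfunE -fsumEFin//.
rewrite ge0_integral_fsum//; last 2 first.
- move=> r0; apply/measurable_EFinP; apply: measurable_funM => //.
- by move=> r x _; rewrite EFinM nnfun_muleindic_ge0.
rewrite ge0_integral_fsum//; last 2 first.
- move=> r0; apply/measurable_EFinP; apply: measurable_funM => //.
- by move=> r x _; rewrite EFinM nnfun_muleindic_ge0.
apply: eq_fsbigr => r _.
have neg r0 : (r0 < 0)%R -> f_ n @^-1` [set r0] = set0.
  by move=> ?; rewrite preimage_nnfun0.
have := @integralZl_indic _ _ _ P E mE (fun r => f_ n @^-1` [set r]) r (neg r) (mlev r).
move=> /= ->.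
have := @integralZl_indic _ _ _ (mscale beta P) setT measurableT (fun r => f_ n @^-1` [set r]) r (neg r) (mlev r).
move=> /= ->.
rewrite !integral_indic//= /mscale setIT hE//.
Qed.
End KL.


Lemma gmono (T0 : pointedType) d' (Y : measurableType d') (G1 G2 : set (set T0))
  (f : T0 -> Y) : G1 `<=` G2 ->
  measurable_fun setT (f : g_sigma_algebraType G1 -> Y) ->
  measurable_fun setT (f : g_sigma_algebraType G2 -> Y).
Proof.
move=> sub mf _ B mB; have := mf measurableT B mB.
apply: (smallest_sub (smallest_sigma_algebra setT G2)).
exact: (subset_trans sub (@sub_sigma_algebra _ setT G2)).
Qed.

Section Mart.
Context (R : realType) d (Omega : measurableType d) (P : probability Omega R).
Variables (F : nat -> set (set Omega)) (T : nat) (idx : nat -> Omega -> nat).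
Variables (i : nat) (a lam : R) (x : nat -> Omega -> R).
Hypothesis HF : filtration F T.
Hypothesis a0 : 0 <= a.
Hypothesis lam0 : 0 <= lam.
Hypothesis Hidx : forall t, (1 <= t <= T)%N -> nat_measurable_wrt (F t) (idx t).
Hypothesis Hind : forall t, (1 <= t <= T)%N -> forall A, F t.-1 A ->
  (P (A `&` (idx t @^-1` [set i])) = a%:E * P A)%E.
Hypothesis x0 : forall t w, (1 <= t <= T)%N -> 0 <= x t w.
Hypothesis Hx : forall t, (1 <= t <= T)%N ->
  measurable_fun setT (x t : g_sigma_algebraType (F t.-1) -> R).

Definition ind t w : R := (idx t w == i)%:R.
Definition phi t w := a * (expR (lam * x t w) - 1).
Definition term t w := lam * ind t w * x t w - phi t w.
Definition S t w := \sum_(1 <= tau < t.+1) term tau w.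

Lemma Fmono m n : (m <= n <= T)%N -> F m `<=` F n.
Proof.
case: HF => _ _ Hs.
elim: n => [|n IH] /andP[mn nT].
  by move: mn; rewrite leqn0 => /eqP ->.
move: mn; rewrite leq_eqVlt => /orP[/eqP -> //|mn].
apply: subset_trans (Hs n nT); apply: IH.
by rewrite -ltnS mn /= ltnW.
Qed.

Lemma meas_ind tau s : (1 <= tau)%N -> (tau <= s <= T)%N ->
  measurable_fun setT (ind tau : g_sigma_algebraType (F s) -> R).
Proof.
move=> t1 /andP[ts sT].
have -> : ind tau = \1_(idx tau @^-1` [set i]).
  apply/funext => w; rewrite /ind indicE; case: eqP => h.
    by rewrite mem_set.
  by rewrite memNset.
apply: measurable_indic; apply: sub_sigma_algebra.
have Fts : F tau `<=` F s by apply: Fmono; rewrite ts.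
apply: Fts.
apply: Hidx; rewrite t1 /=; exact: leq_trans ts sT.
Qed.

Lemma meas_x tau s : (1 <= tau <= T)%N -> (tau.-1 <= s <= T)%N ->
  measurable_fun setT (x tau : g_sigma_algebraType (F s) -> R).
Proof.
move=> tT sT; apply: (gmono (G1 := F tau.-1)); last exact: Hx.
exact: Fmono.
Qed.

Lemma meas_phi tau s : (1 <= tau <= T)%N -> (tau.-1 <= s <= T)%N ->
  measurable_fun setT (phi tau : g_sigma_algebraType (F s) -> R).
Proof.
move=> tT sT; rewrite /phi.
apply: measurable_funM; first exact: measurable_cst.
apply: measurable_funB; last exact: measurable_cst.
apply: measurableT_comp; first exact: measurable_expR.
apply: measurable_funM; first exact: measurable_cst.
exact: meas_x.
Qed.

Lemma meas_term tau s : (1 <= tau <= T)%N -> (tau <= s <= T)%N ->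
  measurable_fun setT (term tau : g_sigma_algebraType (F s) -> R).
Proof.
move=> tT /andP[ts sT]; rewrite /term.
have s1 : (tau.-1 <= s <= T)%N by rewrite sT andbT (leq_trans (leq_pred _) ts).
apply: measurable_funB; last exact: meas_phi.
apply: measurable_funM; last exact: meas_x.
apply: measurable_funM; first exact: measurable_cst.
apply: meas_ind => //; first by case/andP: tT.
by rewrite ts.
Qed.

Lemma S_rec t : S t.+1 = (fun w => S t w + term t.+1 w).
Proof. by apply/funext => w; rewrite /S big_nat_recr. Qed.

Lemma S0 : S 0 = (fun=> 0).
Proof. by apply/funext => w; rewrite /S big_geq. Qed.

Lemma meas_S t : (t <= T)%N ->
  measurable_fun setT (S t : g_sigma_algebraType (F t) -> R).
Proof.
elim: t => [|t IH] tT.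
  by rewrite S0; exact: measurable_cst.
rewrite S_rec; apply: measurable_funD.
  apply: (gmono (G1 := F t)); last by apply: IH; exact: ltnW.
  by apply: Fmono; rewrite leqnSn.
by apply: meas_term; rewrite ?leqnn tT.
Qed.

Lemma HFM t : (t <= T)%N -> F t `<=` measurable.
Proof. by case: HF => _ H _; exact: H. Qed.

Lemma HFS t : (t <= T)%N -> sigma_algebra setT (F t).
Proof. by case: HF => H _ _; exact: H. Qed.

Lemma Zint t : (t <= T)%N -> (\int[P]_w (expR (S t w))%:E <= 1)%E.
Proof.
elim: t => [|t IH] tT.
  rewrite S0 expR0 (_ : (fun w => _) = cst 1%:E)//.
  by rewrite integral_cst // mul1e; apply: probability_le1.
have tT' : (t <= T)%N := ltnW tT.
have t1T : (1 <= t.+1 <= T)%N by rewrite tT.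
set E := idx t.+1 @^-1` [set i].
have GM := HFM tT'.
have GS := HFS tT'.
have mE : measurable E by apply: (HFM tT); exact: Hidx.
pose h w := expR (S t w) * expR (- phi t.+1 w).
pose g w := h w * (expR (lam * x t.+1 w) - 1).
have tt1 : (t.+1.-1 <= t <= T)%N by rewrite leqnn tT'.
have mh : measurable_fun setT (h : g_sigma_algebraType (F t) -> R).
  rewrite /h. refine (measurable_funM _ _).
    apply: measurableT_comp; first exact: measurable_expR.
    exact: meas_S.
  apply: measurableT_comp; first exact: measurable_expR.
  by apply: measurable_funN; exact: meas_phi.
have mg : measurable_fun setT (g : g_sigma_algebraType (F t) -> R).
  rewrite /g; apply: measurable_funM => //.
  apply: measurable_funB; last exact: measurable_cst.
  apply: measurableT_comp; first exact: measurable_expR.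
  apply: measurable_funM; first exact: measurable_cst.
  exact: meas_x.
have h0 w : 0 <= h w by rewrite mulr_ge0 // ltW // expR_gt0.
have g0 w : 0 <= g w.
  rewrite mulr_ge0 // subr_ge0 -expR0 ler_expR mulr_ge0 //.
  exact: x0.
have Hpt w : (expR (S t.+1 w))%:E = ((h w)%:E + (g w)%:E * (\1_E w)%:E)%E.
  rewrite S_rec /term /g /h /= -EFinM -EFinD; congr (_%:E).
  rewrite expRD (addrC _ (- _)) expRD indicE /ind.
  case: (boolP (w \in E)) => wE.
    move: (wE); rewrite inE /E /= => ->; rewrite eqxx mulr1 /=; ring.
  have -> : (idx t.+1 w == i) = false.
    by apply/negbTE; apply: contra wE => /eqP h1; rewrite inE.
  by rewrite /= !mulr0 mul0r expR0 mulr1 addr0.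
under eq_integral => w _ do rewrite Hpt.
have mhO := gmeas_fun GM mh.
have mgO := gmeas_fun GM mg.
rewrite ge0_integralD //; last 4 first.
- by move=> w _; rewrite lee_fin.
- exact/measurable_EFinP.
- by move=> w _; rewrite -EFinM lee_fin mulr_ge0.
- by apply: emeasurable_funM; apply/measurable_EFinP => //; exact: measurable_indic.
have -> : (\int[P]_w ((g w)%:E * (\1_E w)%:E) = \int[P]_(w in E) (g w)%:E)%E.
  rewrite [RHS]integral_mkcond; apply: eq_integral => w _; rewrite patchE indicE.
  by case: (w \in E); rewrite ?mule1 ?mule0.
rewrite (KL GM GS mE (beta := NngNum a0) (Hind t1T) (f := fun w => (g w)%:E)); last 2 first.
- exact/measurable_EFinP.
- by move=> w; rewrite lee_fin.
rewrite /= -ge0_integralZl //; last 2 first.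
- exact/measurable_EFinP.
- by move=> w _; rewrite lee_fin.
rewrite -ge0_integralD //; last 4 first.
- by move=> w _; rewrite lee_fin.
- exact/measurable_EFinP.
- by move=> w _; rewrite -EFinM lee_fin mulr_ge0.
- by apply: emeasurable_funM => //; exact/measurable_EFinP.
apply: le_trans (IH tT').
apply: ge0_le_integral => //.
- by move=> w _; rewrite -EFinM -EFinD lee_fin addr_ge0 // mulr_ge0.
- by apply: emeasurable_funD => //; [exact/measurable_EFinP|apply: emeasurable_funM => //; exact/measurable_EFinP].
- apply/measurable_EFinP; apply: measurableT_comp; first exact: measurable_expR.
  exact: (gmeas_fun (HFM tT') (meas_S tT')).
move=> w _; rewrite -EFinM -EFinD lee_fin /g /h.
have e1 := expR_ge1Dx (phi t.+1 w).
have e2 : expR (- phi t.+1 w) * expR (phi t.+1 w) = 1 by rewrite -expRD addNr expR0.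
have eS := expR_gt0 (S t w).
have eN := expR_gt0 (- phi t.+1 w).
have -> : expR (S t w) * expR (- phi t.+1 w) + a * (expR (S t w) * expR (- phi t.+1 w) * (expR (lam * x t.+1 w) - 1))
   = expR (S t w) * expR (- phi t.+1 w) * (1 + phi t.+1 w) by rewrite /phi; ring.
apply: (@le_trans _ _ (expR (S t w) * expR (- phi t.+1 w) * expR (phi t.+1 w))).
  by rewrite ler_wpM2l // mulr_ge0 // ltW.
by rewrite -mulrA e2 mulr1.
Qed.

Lemma markov_S t (L : R) : (t <= T)%N -> (P [set w | (L <= S t w)%R] <= (expR (- L))%:E)%E.
Proof.
move=> tT.
have GM := HFM tT.
have mSO : measurable_fun setT (S t : Omega -> R) := gmeas_fun GM (meas_S tT).
set B := [set w | (L <= S t w)%R].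
have mB : measurable B.
  have := mSO measurableT _ (measurable_itv `[L, +oo[); rewrite setTI.
  rewrite (_ : _ @^-1` _ = B) //; apply/seteqP; split => w;
    by rewrite /B /= in_itv /= andbT.
have h1 : ((expR L)%:E * P B <= 1)%E.
  rewrite -(setIT B) -integral_indic // -ge0_integralZl //; last first.
    by apply/measurable_EFinP; exact: measurable_indic.
  apply: le_trans (Zint tT); apply: ge0_le_integral => //.
  - by apply: emeasurable_funM => //; apply/measurable_EFinP; exact: measurable_indic.
  - by apply/measurable_EFinP; apply: measurableT_comp => //; exact: measurable_expR.
  move=> w _; rewrite -EFinM lee_fin indicE.
  case: (boolP (w \in B)) => wB; last by rewrite mulr0 ltW // expR_gt0.
  by rewrite mulr1 ler_expR; move: wB; rewrite inE.
move: h1; rewrite -(@fineK _ (P B)); last by rewrite fin_num_measure.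
rewrite -EFinM !lee_fin expRN => h1.
have eL := expR_gt0 L.
have ev : expR L * (expR L)^-1 = 1 by rewrite mulfV // gt_eqF.
have ev0 : 0 < (expR L)^-1 by rewrite invr_gt0.
nra.
Qed.

Lemma meas_B t (L : R) : (t <= T)%N -> measurable [set w | (L <= S t w)%R].
Proof.
move=> tT.
have mSO : measurable_fun setT (S t : Omega -> R) := gmeas_fun (HFM tT) (meas_S tT).
have := mSO measurableT _ (measurable_itv `[L, +oo[); rewrite setTI.
rewrite (_ : _ @^-1` _ = [set w | (L <= S t w)%R]) //; apply/seteqP; split => w;
  by rewrite /= in_itv /= andbT.
Qed.

End Mart.
Section Det.
Context (R : realType).

Lemma expR_bound (y : R) : 0 <= y -> y <= 1/5 -> expR y - 1 <= 5/4 * y.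
Proof.
move=> y0 y5.
have h := expR_ge1Dx (- y); rewrite expRN in h.
have e0 := expR_gt0 y.
have h2 : (1 - y) * expR y <= 1.
  have := ler_wpM2r (ltW e0) h; rewrite mulVf ?gt_eqF //.
nra.
Qed.

Lemma det (a lam L : R) (s : seq nat) (y z : nat -> R) : 0 <= a -> 0 < lam ->
  (forall tau, tau \in s -> 0 <= z tau /\ lam * z tau <= 1/5) ->
  \sum_(tau <- s) (lam * y tau - a * (expR (lam * z tau) - 1)) < L ->
  \sum_(tau <- s) y tau <= 5/4 * a * \sum_(tau <- s) z tau + L / lam.
Proof.
move=> a0 lam0 hz hL.
rewrite sumrB -mulr_sumr -mulr_sumr in hL.
have hE : \sum_(tau <- s) (expR (lam * z tau) - 1) <= 5/4 * lam * \sum_(tau <- s) z tau.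
  rewrite mulr_sumr big_seq [leRHS]big_seq; apply: ler_sum => tau /hz [z0 zl].
  rewrite -mulrA; apply: expR_bound => //; exact: mulr_ge0 (ltW lam0) z0.
have hQ : lam * (L / lam) = L by rewrite mulrC divfK // gt_eqF.
set Y := \sum_(tau <- s) y tau in hL *.
set Z := \sum_(tau <- s) z tau in hE *.
set E := \sum_(tau <- s) _ in hE hL.
set Q := L / lam in hQ *.
have aE : a * E <= a * (5/4 * lam * Z) by rewrite ler_wpM2l.
nra.
Qed.

Lemma cri_alg (a t L c N S2 Q : R) : 0 <= a -> 0 <= t -> 0 <= L -> 0 < c ->
  0 <= N -> 0 <= S2 -> 0 <= Q -> Q <= t * c ^+ 2 ->
  N <= 5/4 * a * t + 5 * L -> S2 <= 5/4 * a * Q + 5 * c ^+ 2 * L ->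
  Num.sqrt (N * S2) <= 5/4 * a * Num.sqrt (t * Q) + 8 * c * Num.sqrt (a * t * L) + 21 * c * L.
Proof.
move=> a0 t0 L0 c0 N0 S0 Q0 Qt hN hS.
have u0 := sqrtr_ge0 (t * Q). have v0 := sqrtr_ge0 (a * t * L).
have u2 : Num.sqrt (t * Q) ^+ 2 = t * Q by rewrite sqr_sqrtr // mulr_ge0.
have v2 : Num.sqrt (a * t * L) ^+ 2 = a * t * L by rewrite sqr_sqrtr // !mulr_ge0.
set u := Num.sqrt (t * Q) in u0 u2 *. set v := Num.sqrt (a * t * L) in v0 v2 *.
have R0 : 0 <= 5/4 * a * u + 8 * c * v + 21 * c * L.
  by rewrite !addr_ge0 // !mulr_ge0 // ltW.
rewrite -(ger0_norm R0) -sqrtr_sqr ler_sqrt; last exact: sqr_ge0.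
apply: (@le_trans _ _ ((5/4 * a * t + 5 * L) * (5/4 * a * Q + 5 * c ^+ 2 * L))).
  by apply: ler_pM.
have h1 : 0 <= a * u * c * v by rewrite !mulr_ge0 // ltW.
have h2 : 0 <= a * u * c * L by rewrite !mulr_ge0 // ltW.
have h3 : 0 <= c * v * c * L by rewrite !mulr_ge0 // ltW.
have h4 : a * L * Q <= a * L * (t * c ^+ 2) by rewrite ler_wpM2l // mulr_ge0.
have h5 : 0 <= c ^+ 2 * v ^+ 2 by rewrite mulr_ge0 // sqr_ge0.
have h6 : 0 <= c ^+ 2 * L ^+ 2 by rewrite mulr_ge0 // sqr_ge0.
have -> : (5 / 4 * a * u + 8 * c * v + 21 * c * L) ^+ 2 =
  25/16 * a^+2 * u ^+ 2 + 64 * (c^+2 * v^+2) + 441 * (c^+2 * L^+2) + 20 * (a * u * c * v)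
  + (105/2) * (a * u * c * L) + 336 * (c * v * c * L) by field.
rewrite u2 v2.
have -> : (5 / 4 * a * t + 5 * L) * (5 / 4 * a * Q + 5 * c ^+ 2 * L) =
  25/16 * a^+2 * (t * Q) + 25/4 * (a * t * c^+2 * L) + 25/4 * (a * L * Q) + 25 * (c^+2 * L^+2) by field.
have -> : c ^+ 2 * (a * t * L) = a * t * c ^+ 2 * L by field.
have h4' : a * L * Q <= a * t * c ^+ 2 * L.
  by move: h4; rewrite (_ : a * L * (t * c ^+ 2) = a * t * c ^+ 2 * L) //; field.
have h5' : 0 <= a * t * c ^+ 2 * L by rewrite !mulr_ge0 // ?sqr_ge0 // ltW.
lra.
Qed.

End Det.

Section Union.
Context (R : realType) d (Omega : measurableType d) (P : probability Omega R).

Lemma union_bound (U : nat -> set Omega) n :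
  (forall t, (1 <= t <= n)%N -> measurable (U t)) ->
  [/\ measurable (\big[setU/set0]_(1 <= t < n.+1) U t),
      (P (\big[setU/set0]_(1 <= t < n.+1) U t) <= \sum_(1 <= t < n.+1) P (U t))%E &
      forall t, (1 <= t <= n)%N -> U t `<=` \big[setU/set0]_(1 <= t < n.+1) U t].
Proof.
elim: n => [|n IH] hU.
  rewrite !big_geq //; split => //; first by rewrite measure0.
  by move=> t /andP[t1 t0]; move: (leq_trans t1 t0).
have hU' : forall t, (1 <= t <= n)%N -> measurable (U t).
  by move=> t /andP[t1 tn]; apply: hU; rewrite t1 /= ltnW.
have [m1 p1 s1] := IH hU'.
have mU : measurable (U n.+1) by apply: hU; rewrite leqnn.
rewrite (@big_nat_recr _ _ _ n.+1 1 _ isT) (@big_nat_recr _ _ _ n.+1 1 _ isT); split.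
- exact: measurableU.
- by apply: le_trans (measureU2 _ m1 mU) _; apply: leeD2r.
- move=> t /andP[t1]; rewrite leq_eqVlt => /orP[/eqP ->|tn].
    exact: subsetUr.
  by move=> w Uw; left; apply: (s1 t) => //; rewrite t1.
Qed.

Lemma meas_sum_guard (h : nat -> Omega -> R) t n : (t <= n)%N ->
  (forall tau, (1 <= tau <= n)%N -> measurable_fun setT (h tau)) ->
  measurable_fun setT (fun w => \sum_(1 <= tau < t.+1) h tau w).
Proof.
move=> tn hm.
have -> : (fun w => \sum_(1 <= tau < t.+1) h tau w) =
  (fun w => \sum_(tau <- index_iota 1 t.+1) (if (1 <= tau <= n)%N then h tau w else 0)).
  apply/funext => w; apply: eq_big_seq => tau; rewrite mem_index_iota => /andP[t1 tt].
  by rewrite t1 /= (leq_trans _ tn) // -ltnS.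
apply: measurable_sum => tau; have [htau|htau] := boolP ((1 <= tau <= n)%N).
  exact: hm.
exact: measurable_cst.
Qed.

End Union.

Unset Implicit Arguments.
Theorem lemma15 (R : realType) (d : measure_display) (Omega : measurableType d)
    (P : probability Omega R) (T : nat) (F : nat -> set (set Omega))
    (k kmax : nat) (alpha : nat -> R) (cmax delta : R)
    (idx : nat -> Omega -> nat) (c : nat -> Omega -> R) (i : nat) :
  filtration F T ->
  (k <= kmax)%N ->
  (forall j, (k <= j <= kmax)%N -> 0 <= alpha j) ->
  \sum_(k <= j < kmax.+1) alpha j = 1 ->
  0 < cmax -> 0 < delta < 1 ->
  (* the random indices i_t *)
  (forall t, (1 <= t <= T)%N -> nat_measurable_wrt (F t) (idx t)) ->
  (forall t w, (1 <= t <= T)%N -> (k <= idx t w <= kmax)%N) ->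
  (forall t, (1 <= t <= T)%N -> forall A, F t.-1 A ->
     forall j, (k <= j <= kmax)%N ->
       (P (A `&` (idx t @^-1` [set j])) = (alpha j)%:E * P A)%E) ->
  (* the corruption levels c_t *)
  (forall t w, (1 <= t <= T)%N -> 0 <= c t w <= cmax) ->
  (forall t, (1 <= t <= T)%N -> real_measurable_wrt (F t.-1) (c t)) ->
  (* the fixed index i *)
  (k <= i <= kmax)%N ->
  ((1 - 3 * delta)%:E <=
   P [set w | forall t, (1 <= t <= T)%N ->
       (Cai c idx t i w <= 5 / 4 * alpha i * Ca c t w
                          + 21 * cmax * ln (T%:R / delta)
       /\ Cri c idx t i w <= 5 / 4 * alpha i * Cr c t w
                          + 8 * cmax * Num.sqrt (alpha i * t%:R * ln (T%:R / delta))
                          + 21 * cmax * ln (T%:R / delta))%R])%E.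
Proof.
move=> HF Hk Ha0 Hsum Hc0 /andP[d0 d1] Hidx Hidxr Hind0 Hc Hcm Hi.
have a0 : 0 <= alpha i by apply: Ha0.
have Hind : forall t, (1 <= t <= T)%N -> forall A, F t.-1 A ->
    (P (A `&` (idx t @^-1` [set i])) = (alpha i)%:E * P A)%E.
  by move=> t tT A FA; apply: Hind0.
have [T0|Tpos] := posnP T.
  rewrite (_ : [set w | _] = setT); last first.
    apply/seteqP; split => // w _ t; rewrite T0 => /andP[t1 t0].
    by move: (leq_trans t1 t0).
  rewrite (_ : P setT = 1%E); last exact: probability_setT.
  rewrite lee_fin; lra.
set L := ln (T%:R / delta).
have T1 : (1 <= T%:R :> R) by rewrite ler1n.
have Td : 0 < T%:R / delta by rewrite divr_gt0 // ltr0n.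
have L0 : 0 <= L.
  apply: ln_ge0; rewrite ler_pdivlMr // mul1r; lra.
have eL : expR (- L) = delta / T%:R by rewrite expRN lnK ?invf_div // posrE.
have HFM t : (t <= T)%N -> F t `<=` measurable by case: HF => _ H _; exact: H.
have mcG t : (1 <= t <= T)%N ->
    measurable_fun setT (c t : g_sigma_algebraType (F t.-1) -> R).
  move=> tT _ B mB; rewrite setTI; apply: sub_sigma_algebra; exact: Hcm.
have mcO t : (1 <= t <= T)%N -> measurable_fun setT (c t).
  move=> tT; apply: (gmeas_fun (HFM t.-1 _)) (mcG t tT).
  by case/andP: tT => _ /(leq_trans (leq_pred _)).
have mindO t : (1 <= t <= T)%N -> measurable_fun setT (fun w => ((idx t w == i)%:R : R)).
  move=> tT; rewrite (_ : (fun w => _) = \1_(idx t @^-1` [set i])).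
    apply: measurable_indic; apply: (HFM t); [by case/andP: tT|exact: Hidx].
  apply/funext => w; rewrite indicE; case: eqP => h.
    by rewrite mem_set.
  by rewrite memNset.
pose lam1 := (5 * cmax)^-1.
pose lam2 : R := 5^-1.
pose lam3 := (5 * cmax ^+ 2)^-1.
pose x2 : nat -> Omega -> R := fun _ _ => 1.
pose x3 : nat -> Omega -> R := fun t w => c t w ^+ 2.
have l1 : 0 < lam1 by rewrite invr_gt0 mulr_gt0.
have l2 : 0 < lam2 by rewrite invr_gt0.
have l3 : 0 < lam3 by rewrite invr_gt0 mulr_gt0 // exprn_gt0.
have c0 t w : (1 <= t <= T)%N -> 0 <= c t w by move=> /(Hc t w) /andP[].
have x20 t w : (1 <= t <= T)%N -> 0 <= x2 t w by move=> _; rewrite /x2.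
have x30 t w : (1 <= t <= T)%N -> 0 <= x3 t w by move=> _; rewrite /x3 sqr_ge0.
have Hx2 t : (1 <= t <= T)%N ->
    measurable_fun setT (x2 t : g_sigma_algebraType (F t.-1) -> R).
  by move=> _; exact: measurable_cst.
have Hx3 t : (1 <= t <= T)%N ->
    measurable_fun setT (x3 t : g_sigma_algebraType (F t.-1) -> R).
  by move=> tT; apply: measurable_funX; exact: mcG.
pose B1 t := [set w | (L <= S idx i (alpha i) lam1 c t w)%R].
pose B2 t := [set w | (L <= S idx i (alpha i) lam2 x2 t w)%R].
pose B3 t := [set w | (L <= S idx i (alpha i) lam3 x3 t w)%R].
pose U t := B1 t `|` B2 t `|` B3 t.
have mU t : (1 <= t <= T)%N -> measurable (U t).
  move=> /andP[_ tT]; apply: measurableU; first apply: measurableU.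
  - exact: (meas_B i (alpha i) lam1 HF Hidx mcG).
  - exact: (meas_B i (alpha i) lam2 HF Hidx Hx2).
  - exact: (meas_B i (alpha i) lam3 HF Hidx Hx3).
have [mbad pbad sbad] := union_bound P mU.
have pB1 t : (1 <= t <= T)%N -> (P (B1 t) <= (delta / T%:R)%:E)%E.
  move=> /andP[_ tT]; rewrite -eL; exact: (markov_S HF a0 (ltW l1) Hidx Hind c0 mcG).
have pB2 t : (1 <= t <= T)%N -> (P (B2 t) <= (delta / T%:R)%:E)%E.
  move=> /andP[_ tT]; rewrite -eL; exact: (markov_S HF a0 (ltW l2) Hidx Hind x20 Hx2).
have pB3 t : (1 <= t <= T)%N -> (P (B3 t) <= (delta / T%:R)%:E)%E.
  move=> /andP[_ tT]; rewrite -eL; exact: (markov_S HF a0 (ltW l3) Hidx Hind x30 Hx3).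
set bad := \big[setU/set0]_(1 <= t < T.+1) U t in mbad pbad sbad.
have Pbad : (P bad <= (3 * delta)%:E)%E.
  apply: le_trans pbad _.
  apply: (@le_trans _ _ (\sum_(1 <= t < T.+1) ((3 * (delta / T%:R))%:E))%E).
    rewrite big_seq [X in (_ <= X)%E]big_seq; apply: lee_sum => t.
    rewrite mem_index_iota => ht.
    have ht' : (1 <= t <= T)%N by rewrite -ltnS.
    have /andP[_ tT] := ht'.
    have mb1 := meas_B i (alpha i) lam1 HF Hidx mcG L tT.
    have mb2 := meas_B i (alpha i) lam2 HF Hidx Hx2 L tT.
    have mb3 := meas_B i (alpha i) lam3 HF Hidx Hx3 L tT.
    rewrite /U.
    have mb1' : measurable (B1 t) := mb1.
    have mb2' : measurable (B2 t) := mb2.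
    have mb3' : measurable (B3 t) := mb3.
    apply: (le_trans (measureU2 P (measurableU _ _ mb1' mb2') mb3')).
    rewrite (_ : 3 * (delta / T%:R) = delta / T%:R + delta / T%:R + delta / T%:R); last by ring.
    rewrite !EFinD; apply: leeD; last exact: pB3.
    apply: (le_trans (measureU2 P mb1' mb2')).
    by apply: leeD; [exact: pB1|exact: pB2].
  rewrite sumEFin sumr_const_nat lee_fin subSS subn0.
  have eqT : (delta / T%:R) *+ T = delta by rewrite -mulr_natr divfK // pnatr_eq0 -lt0n.
  by rewrite -mulrnAr eqT.
have mCa t : (t <= T)%N -> measurable_fun setT (Ca c t).
  move=> tT; exact: (meas_sum_guard (h := c) tT mcO).
have mCai t : (t <= T)%N -> measurable_fun setT (Cai c idx t i).
  move=> tT; apply: (meas_sum_guard (h := fun tau w => (idx tau w == i)%:R * c tau w) tT).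
  move=> tau htau; refine (measurable_funM _ _); [exact: mindO|exact: mcO].
have msq : measurable_fun setT (@Num.sqrt R) := continuous_measurable_fun (@sqrt_continuous R).
have mCr t : (t <= T)%N -> measurable_fun setT (Cr c t).
  move=> tT; apply: (measurableT_comp msq).
  refine (measurable_funM _ _); first exact: measurable_cst.
  apply: (meas_sum_guard (h := fun tau w => c tau w ^+ 2) tT).
  by move=> tau htau; apply: measurable_funX; exact: mcO.
have mCri t : (t <= T)%N -> measurable_fun setT (Cri c idx t i).
  move=> tT; apply: (measurableT_comp msq).
  refine (measurable_funM _ _).
    apply: (meas_sum_guard (h := fun tau w => (idx tau w == i)%:R) tT).
    by move=> tau htau; exact: mindO.
  apply: (meas_sum_guard (h := fun tau w => (idx tau w == i)%:R * c tau w ^+ 2) tT).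
  move=> tau htau; refine (measurable_funM _ _); first exact: mindO.
  by apply: measurable_funX; exact: mcO.
set target := [set w | _].
have mtarget : measurable target.
  rewrite (_ : target = \bigcap_(t in [set t | (1 <= t <= T)%N])
     ([set w | Cai c idx t i w <= 5 / 4 * alpha i * Ca c t w + 21 * cmax * L] `&`
      [set w | Cri c idx t i w <= 5 / 4 * alpha i * Cr c t w
                 + 8 * cmax * Num.sqrt (alpha i * t%:R * L) + 21 * cmax * L])); last first.
    by apply/seteqP; split => w /= h t ht; have := h t ht.
  apply: bigcap_measurable.
    by exists 1%N; rewrite /= Tpos.
  move=> t /= /andP[_ tT]; apply: measurableI.
    rewrite -[X in measurable X]setTI; apply: measurable_fun_le => //.
      exact: mCai.
    refine (measurable_funD _ _); last exact: measurable_cst.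
    refine (measurable_funM _ _); first exact: measurable_cst.
    exact: mCa.
  rewrite -[X in measurable X]setTI; apply: measurable_fun_le => //.
    exact: mCri.
  refine (measurable_funD _ _); last exact: measurable_cst.
  refine (measurable_funD _ _); last exact: measurable_cst.
  refine (measurable_funM _ _); first exact: measurable_cst.
  exact: mCr.
have sub : ~` bad `<=` target.
  move=> w nb t ht.
  have /andP[t1 tT] := ht.
  have hin tau : tau \in index_iota 1 t.+1 -> (1 <= tau <= T)%N.
    by rewrite mem_index_iota => /andP[h1 h2]; rewrite h1 /= (leq_trans _ tT) // -ltnS.
  have nU : ~ U t w by move=> h; apply: nb; exact: (sbad t ht).
  have s1 : S idx i (alpha i) lam1 c t w < L.
    by rewrite ltNge; apply/negP => h; apply: nU; left; left.
  have s2 : S idx i (alpha i) lam2 x2 t w < L.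
    by rewrite ltNge; apply/negP => h; apply: nU; left; right.
  have s3 : S idx i (alpha i) lam3 x3 t w < L.
    by rewrite ltNge; apply/negP => h; apply: nU; right.
  have ec1 : lam1 * (5 * cmax) = 1 by rewrite mulVf // gt_eqF // mulr_gt0.
  have ec3 : lam3 * (5 * cmax ^+ 2) = 1 by rewrite mulVf // gt_eqF // mulr_gt0 // exprn_gt0.
  have D1 := @det R (alpha i) lam1 L (index_iota 1 t.+1)
    (fun tau => (idx tau w == i)%:R * c tau w) (fun tau => c tau w) a0 l1.
  have D1' : \sum_(tau <- index_iota 1 t.+1) (idx tau w == i)%:R * c tau w <=
      5 / 4 * alpha i * \sum_(tau <- index_iota 1 t.+1) c tau w + L / lam1.
    apply: D1.
      move=> tau /hin htau; have /andP[cc0 ccM] := Hc tau w htau; split => //.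
      have : lam1 * c tau w <= lam1 * cmax by rewrite ler_wpM2l // ltW.
      lra.
    move: s1; rewrite /S; congr (_ < _); apply: eq_bigr => tau _.
    by rewrite /term /phi /ind mulrA.
  have D2 := @det R (alpha i) lam2 L (index_iota 1 t.+1)
    (fun tau => (idx tau w == i)%:R * 1) (fun tau => 1) a0 l2.
  have D2' : \sum_(tau <- index_iota 1 t.+1) (idx tau w == i)%:R * 1 <=
      5 / 4 * alpha i * \sum_(tau <- index_iota 1 t.+1) 1 + L / lam2.
    apply: D2.
      by move=> tau _; split => //; rewrite mulr1 /lam2; lra.
    move: s2; rewrite /S; congr (_ < _); apply: eq_bigr => tau _.
    by rewrite /term /phi /ind /x2 mulrA.
  have D3 := @det R (alpha i) lam3 L (index_iota 1 t.+1)
    (fun tau => (idx tau w == i)%:R * c tau w ^+ 2) (fun tau => c tau w ^+ 2) a0 l3.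
  have D3' : \sum_(tau <- index_iota 1 t.+1) (idx tau w == i)%:R * c tau w ^+ 2 <=
      5 / 4 * alpha i * \sum_(tau <- index_iota 1 t.+1) c tau w ^+ 2 + L / lam3.
    apply: D3.
      move=> tau /hin htau; have /andP[cc0 ccM] := Hc tau w htau; split; first exact: sqr_ge0.
      have : c tau w ^+ 2 <= cmax ^+ 2 by rewrite ler_pXn2r // ?nnegrE // ltW.
      move=> h; have : lam3 * c tau w ^+ 2 <= lam3 * cmax ^+ 2 by rewrite ler_wpM2l // ltW.
      lra.
    move: s3; rewrite /S; congr (_ < _); apply: eq_bigr => tau _.
    by rewrite /term /phi /ind /x3 mulrA.
  split.
    rewrite /Cai /Ca.
    have e1 : L / lam1 = 5 * cmax * L by rewrite /lam1 invrK mulrC.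
    rewrite e1 in D1'.
    have : 0 <= cmax * L by rewrite mulr_ge0 // ltW.
    move: D1'; lra.
  rewrite /Cri /Cr.
  have sum1 : \sum_(tau <- index_iota 1 t.+1) (1 : R) = t%:R.
    by rewrite sumr_const_nat subSS subn0.
  have hN : \sum_(1 <= tau < t.+1) ((idx tau w == i)%:R : R) <= 5 / 4 * alpha i * t%:R + 5 * L.
    move: D2'; rewrite sum1 (_ : L / lam2 = 5 * L); last by rewrite /lam2 invrK mulrC.
    by under eq_bigr do rewrite mulr1.
  have hS : \sum_(1 <= tau < t.+1) (idx tau w == i)%:R * c tau w ^+ 2 <=
      5 / 4 * alpha i * \sum_(1 <= tau < t.+1) c tau w ^+ 2 + 5 * cmax ^+ 2 * L.
    by move: D3'; rewrite (_ : L / lam3 = 5 * cmax ^+ 2 * L) // /lam3 invrK mulrC.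
  apply: cri_alg => //.
  - by apply: sumr_ge0 => tau _; case: (_ == _).
  - by apply: sumr_ge0 => tau _; rewrite mulr_ge0 // ?sqr_ge0 //; case: (_ == _).
  - by apply: sumr_ge0 => tau _; rewrite sqr_ge0.
  - rewrite -sum1 mulr_suml big_seq [X in _ <= X]big_seq; apply: ler_sum => tau /hin htau.
    have /andP[cc0 ccM] := Hc tau w htau.
    by rewrite mul1r ler_pXn2r // ?nnegrE // ltW.
have Pt : (P (~` bad) <= P target)%E.
  by apply: le_measure => //; rewrite inE //; exact: measurableC.
apply: le_trans Pt.
rewrite (_ : P (~` bad) = (1 - P bad)%E); last exact: probability_setC.
rewrite EFinB; apply: leeB => //.
Qed.
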